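(* Let $k,n,m$ be positive integers with $n+m\le k$ and let $q$ be a prime power. Then there exists a distributed computing (MapReduce) scheme with $$K^{\mathcal{C}}=\frac{1}{n!}q^{\frac{n(n-1)}{2}}\prod_{i=0}^{n-1}\binom{k-i}{1}_q$$ computing nodes, number of file batches $$F^{\mathcal{C}}=\frac{1}{m!}q^{\frac{m(m-1)}{2}}\prod_{i=0}^{m-1}\binom{k-i}{1}_q,$$ computation load $$r^{\mathcal{C}}=K^{\mathcal{C}}\Big(1-q^{nm}\prod_{i=0}^{m-1}\frac{\binom{k-n-i}{1}_q}{\binom{k-i}{1}_q}\Big),$$ and communication load $$L^{\mathcal{C}}=\frac{q^{nm}}{\binom{n+m}{n}-1}\prod_{i=0}^{n-1}\frac{\binom{k-m-i}{1}_q}{\binom{k-i}{1}_q}.$$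
   Context: $\binom{a}{1}_q=\frac{q^a-1}{q-1}$; $\binom{n+m}{n}$ is an ordinary binomial coefficient. Distributed computing model: there are $N$ input files, $K^{\mathcal{C}}$ computing nodes and $Q$ output functions (with $Q/K^{\mathcal{C}}$ an integer). In the map phase the files are split into $F^{\mathcal{C}}$ batches of $N/F^{\mathcal{C}}$ files each; each node $k$ stores a set $\mathcal{M}_k$ of files (a union of batches) and computes, for every file it stores, the $Q$ intermediate values (one per output function), each a $T$-bit vector. In the shuffle phase each node $k$ broadcasts to the others a signal of $l_k$ bits computed from its intermediate values. In the reduce phase each node is assigned $Q/K^{\mathcal{C}}$ output functions and must recover, from the received signals and its own intermediate values, all intermediate values (over all $N$ files) of its assigned functions. The computation load is $r^{\mathcal{C}}=\sum_{k}|\mathcal{M}_k|/N$ and the communication load is $L^{\mathcal{C}}=\sum_k l_k/(QNT)$. *)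

(* Defs.v *)
From mathcomp Require Import all_boot all_order all_algebra.
Set Implicit Arguments. Unset Strict Implicit. Unset Printing Implicit Defensive.
Import Order.TTheory GRing.Theory Num.Theory.

Definition is_prime_power (q : nat) : Prop :=
  exists p e : nat, prime p /\ 0 < e /\ q = p ^ e.

Definition gbin1 (q a : nat) : rat :=
  (((q%:R : rat) ^+ a) - 1) / ((q%:R : rat) - 1).

Definition ivals (N Q T : nat) := 'I_N -> 'I_Q -> T.-tuple bool.

(* A MapReduce scheme with N files, K nodes, Q output functions,
   F file batches (N/F files each) and T-bit intermediate values. *)
Record scheme (N K Q F T : nat) := Scheme {
  batch : 'I_N -> 'I_F;
  batch_size : forall b : 'I_F, #|[set f | batch f == b]| = N %/ F;
  store : 'I_K -> {set 'I_F};
  assign : 'I_Q -> 'I_K;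
  assign_size : forall k : 'I_K, #|[set j | assign j == k]| = Q %/ K;
  (* shuffle phase: node k broadcasts len k bits computed from its
     intermediate values (those of the files it stores) *)
  len : 'I_K -> nat;
  enc : 'I_K -> ivals N Q T -> seq bool;
  enc_size : forall k v, size (enc k v) = len k;
  enc_local : forall k (v v' : ivals N Q T),
    (forall f j, batch f \in store k -> v f j = v' f j) -> enc k v = enc k v';
  dec : 'I_K -> ('I_K -> seq bool) -> ivals N Q T -> ivals N Q T;
  dec_local : forall k (s s' : 'I_K -> seq bool) (v v' : ivals N Q T),
    (forall i, s i = s' i) ->
    (forall f j, batch f \in store k -> v f j = v' f j) ->
    forall f j, dec k s v f j = dec k s' v' f j;
  dec_correct : forall k (v : ivals N Q T) f j,
    assign j = k -> dec k (fun i => enc i v) v f j = v f j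
}.

Definition stored_files N K Q F T (S : scheme N K Q F T) (k : 'I_K) : {set 'I_N} :=
  [set f | batch S f \in store S k].

Definition comp_load N K Q F T (S : scheme N K Q F T) : rat :=
  ((\sum_(k < K) #|stored_files S k|)%N)%:R / (N%:R).

Definition comm_load N K Q F T (S : scheme N K Q F T) : rat :=
  ((\sum_(k < K) len S k)%N)%:R / ((Q * N * T)%N%:R).

(* Main.v *)
Require Import Defs.
From mathcomp Require Import all_boot all_order all_algebra all_field.
From mathcomp Require Import zify ring.
From Stdlib Require Import FunctionalExtensionality.
Import Order.TTheory GRing.Theory Num.Theory.

Module Geo.
Set Implicit Arguments. Unset Strict Implicit. Unset Printing Implicit Defensive.

Lemma card_pairs (T1 T2 : finType) (P : pred T1) (Q : T1 -> pred T2) :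
  #|[set p : T1 * T2 | P p.1 && Q p.1 p.2]| = (\sum_(a | P a) #|[set b | Q a b]|)%N.
Proof.
rewrite -sum1_card.
under [RHS]eq_bigr do rewrite -sum1_card.
rewrite pair_big_dep; apply: eq_bigl => p; by rewrite !inE.
Qed.

Section Geom.
Variables (F : finFieldType) (k : nat).
Local Notation V := 'rV[F]_k.
Local Open Scope ring_scope.

Definition normed (x : V) : bool :=
  (x != 0) && [forall c : F, (c != 0) ==> (enum_rank x <= enum_rank (c *: x))%N].

Lemma normed_count (W : {vspace V}) :
  ((#|F| - 1) * #|[set x | normed x && (x \in W)]| = #|F| ^ \dim W - 1)%N.
Proof.
set X := [set x | normed x && (x \in W)].
pose phi (p : F * V) := p.1 *: p.2.
pose D := [set p : F * V | (p.1 != 0) && (normed p.2 && (p.2 \in W))].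
have H1 : #|D| = ((#|F| - 1) * #|X|)%N.
  rewrite /D (card_pairs (fun c => c != 0) (fun _ x => normed x && (x \in W))).
  rewrite sum_nat_const; congr (_ * _)%N.
  by rewrite cardC1 subn1.
have inj : {in D &, injective phi}.
  move=> [c x] [c' x'] /[!inE] /= /andP[c0 /andP[nx _]] /andP[c0' /andP[nx' _]].
  rewrite /phi /= => E.
  have ex : x' = (c'^-1 * c) *: x by rewrite -scalerA E scalerA mulVf // scale1r.
  have ex' : x = (c^-1 * c') *: x' by rewrite -scalerA -E scalerA mulVf // scale1r.
  move: nx nx' => /andP[x0 /forallP nx] /andP[x0' /forallP nx'].
  have r1 := nx (c'^-1 * c); rewrite mulf_neq0 ?invr_eq0 //= -ex in r1.
  have r2 := nx' (c^-1 * c'); rewrite mulf_neq0 ?invr_eq0 //= -ex' in r2.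
  have exx : x = x'.
    by apply: enum_rank_inj; apply: val_inj; apply/eqP; rewrite eqn_leq r1 r2.
  clear ex ex' r1 r2 nx'; subst x'; congr (_, _).
  apply/eqP; rewrite -subr_eq0; apply/eqP.
  have : (c - c') *: x = 0.
    by rewrite scalerBl E subrr.
  by move/eqP; rewrite scaler_eq0 (negbTE x0) orbF => /eqP.
have H2 : phi @: D = [set y | (y \in W) && (y != 0)].
  apply/setP => y; rewrite inE; apply/imsetP/idP.
    case=> [[c x]] /[!inE] /= /andP[c0 /andP[nx xW]] ->.
    rewrite /phi /= memvZ //= scaler_eq0 negb_or c0 /=.
    by case/andP: nx.
  move=> /andP[yW y0].
  case: (@arg_minnP F 1 (fun c => c != 0) (fun c => enum_rank (c *: y)) (oner_neq0 _)).
  move=> c cnz cmin.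
  exists (c^-1, c *: y); last by rewrite /phi /= scalerA mulVf // scale1r.
  rewrite inE /= invr_eq0 cnz memvZ //= andbT.
  rewrite /normed scaler_eq0 negb_or cnz y0 /=.
  apply/forallP => d; apply/implyP => d0.
  by rewrite scalerA; apply: cmin; rewrite mulf_neq0.
rewrite -H1 -(card_in_imset inj) H2.
rewrite -card_vspace.
have -> : #|W| = #|[set y | y \in W]| by rewrite cardsE.
rewrite (cardsD1 0 [set y | y \in W]) inE mem0v add1n subn1 /=.
by apply: eq_card => y; rewrite !inE andbC.
Qed.

Definition good (j : nat) (A : {set V}) : bool :=
  [&& #|A| == j, A \subset [set x | normed x] & free (enum A)].

Lemma good_card j A : good j A -> #|A| = j.
Proof. by case/and3P=> /eqP. Qed.

Lemma free_sub (A S : {set V}) : A \subset S -> free (enum S) -> free (enum A).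
Proof.
move=> AS fS.
have pe : perm_eq (enum S) (enum A ++ enum (S :\: A)).
  apply: uniq_perm; first exact: enum_uniq.
    rewrite cat_uniq !enum_uniq andbT /=.
    apply/hasPn => x; rewrite !mem_enum !inE => /andP[xA _]; by rewrite xA.
  move=> x; rewrite mem_cat !mem_enum !inE.
  by case xA: (x \in A); rewrite ?andbT //=; apply: (subsetP AS).
by move: fS; rewrite (perm_free pe); apply: catl_free.
Qed.

Lemma good_sub (n m : nat) (S U : {set V}) :
  good (n + m) S -> U \subset S -> #|U| = n -> good n U && good m (S :\: U).
Proof.
case/and3P=> /eqP cS nS fS US cU.
apply/andP; split; apply/and3P; split.
- by rewrite cU.
- exact: subset_trans US nS.
- exact: free_sub fS.
- by rewrite cardsDS // cS cU addKn.
- exact: subset_trans (subsetDl _ _) nS.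
- exact: free_sub (subsetDl _ _) fS.
Qed.

Definition G j := #|[set A | good j A]|.

Lemma G0 : G 0 = 1%N.
Proof.
rewrite /G (_ : [set A | good 0 A] = [set set0]) ?cards1 //.
apply/setP => A; rewrite !inE.
apply/idP/idP.
  by case/and3P => /eqP/cards0_eq ->.
move/eqP->; rewrite /good cards0 sub0set /= enum_set0.
by rewrite /free span_nil dimv0.
Qed.

Lemma good_dim j A : good j A -> \dim <<enum A>> = j.
Proof. by case/and3P=> /eqP cA _ /eqP; rewrite -cardE cA. Qed.

Lemma dim_full : \dim (fullv : {vspace V}) = k.
Proof. by rewrite dimvf /dim /= mul1n. Qed.

Lemma count_out (A : {set V}) j : good j A ->
  ((#|F| - 1) * #|[set x | normed x && (x \notin <<enum A>>%VS)]| = #|F| ^ k - #|F| ^ j)%N.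
Proof.
move=> gA.
have full := normed_count fullv.
have part := normed_count <<enum A>>%VS.
rewrite dim_full in full; rewrite (good_dim gA) in part.
have split : #|[set x | normed x && (x \in (fullv : {vspace V}))]| =
   (#|[set x | normed x && (x \in <<enum A>>%VS)]| +
    #|[set x | normed x && (x \notin <<enum A>>%VS)]|)%N.
  rewrite -(cardsID [set x | x \in <<enum A>>%VS]); congr (_ + _)%N;
  apply: eq_card => x; rewrite !inE ?memvf ?andbT //.
  by rewrite andbC.
rewrite split mulnDr part in full.
have h1 : (1 <= #|F| ^ j)%N by rewrite expn_gt0 (cardD1 0).
move: full h1; set a := (_ * #|_|)%N; set b := (#|F| ^ k)%N; set c := (#|F| ^ j)%N.
lia.
Qed.

Lemma good_rec j : ((#|F| - 1) * (j.+1 * G j.+1) = G j * (#|F| ^ k - #|F| ^ j))%N.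
Proof.
pose P1 := [set p : {set V} * V | good j p.1 && (normed p.2 && (p.2 \notin <<enum p.1>>%VS))].
pose P2 := [set p : {set V} * V | good j.+1 p.1 && (p.2 \in p.1)].
pose phi (p : {set V} * V) := (p.2 |: p.1, p.2).
have cP1 : ((#|F| - 1) * #|P1| = G j * (#|F| ^ k - #|F| ^ j))%N.
  rewrite /P1 (card_pairs (good j) (fun A x => normed x && (x \notin <<enum A>>%VS))).
  rewrite big_distrr /= (eq_bigr (fun _ => (#|F| ^ k - #|F| ^ j)%N)).
    by rewrite sum_nat_const /G cardsE.
  by move=> A gA; rewrite (count_out gA).
have cP2 : #|P2| = (j.+1 * G j.+1)%N.
  rewrite /P2 (card_pairs (good j.+1) (fun A x => x \in A)).
  rewrite (eq_bigr (fun _ => j.+1)).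
    by rewrite sum_nat_const /G cardsE mulnC.
  by move=> A gA; rewrite cardsE (good_card gA).
have notin A x : good j A -> x \notin <<enum A>>%VS -> x \notin A.
  move=> _; apply: contra => xA; apply: memv_span; by rewrite mem_enum.
have inj : {in P1 &, injective phi}.
  move=> [A x] [A' x'] /[!inE] /= /andP[gA /andP[_ xA]] /andP[gA' /andP[_ xA']].
  rewrite /phi /= => -[E ex]; subst x'.
  by rewrite -(setU1K (notin _ _ gA xA)) E setU1K // (notin _ _ gA' xA').
have im : phi @: P1 = P2.
  apply/setP => [[B x]]; rewrite inE /=; apply/imsetP/idP.
    case=> [[A y]] /[!inE] /= /andP[gA /andP[ny yA]] [-> ->].
    rewrite setU11 andbT.
    have yA' := notin _ _ gA yA.
    case/and3P: gA => /eqP cA nA fA.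
    apply/and3P; split.
    - by rewrite cardsU1 yA' cA.
    - by rewrite subUset sub1set inE ny nA.
    - have pe : perm_eq (enum (y |: A)) (y :: enum A).
        apply: uniq_perm; rewrite ?enum_uniq //=.
          by rewrite mem_enum yA' enum_uniq.
        by move=> z; rewrite in_cons !mem_enum in_setU1.
      by rewrite (perm_free pe) free_cons yA fA.
  case/andP=> gB xB.
  exists (B :\ x, x); last by rewrite /phi /= setD1K.
  case/and3P: gB => /eqP cB nB fB.
  have pe : perm_eq (enum B) (x :: enum (B :\ x)).
    apply: uniq_perm; rewrite ?enum_uniq //=.
      by rewrite mem_enum !inE eqxx enum_uniq.
    move=> z; rewrite in_cons !mem_enum !inE.
    by case: (eqVneq z x) => [->|].
  move: fB; rewrite (perm_free pe) free_cons => /andP[xnot fBx].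
  rewrite inE /= xnot andbT.
  apply/andP; split; last by move/subsetP: nB => /(_ x xB); rewrite inE.
  apply/and3P; split => //.
  - by move: cB; rewrite (cardsD1 x) xB add1n => -[->].
  - exact: subset_trans (subsetDl _ _) nB.
rewrite -cP2 -im card_in_imset //.
Qed.

Lemma G_prod j :
  (G j * j`! * (#|F| - 1) ^ j = \prod_(i < j) (#|F| ^ k - #|F| ^ i))%N.
Proof.
elim: j => [|j IH]; first by rewrite G0 big_ord0.
rewrite big_ord_recr /= -IH.
have R := good_rec j.
rewrite factS expnS.
move: R; set a := G j.+1; set b := G j; set c := j`!; set d := (#|F| - 1)%N;
set e := (d ^ j)%N; set f := (_ - _)%N => R.
transitivity ((d * (j.+1 * a)) * (c * e))%N; first by nia.
by rewrite R; nia.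
Qed.

End Geom.

End Geo.

Module Des.
Set Implicit Arguments. Unset Strict Implicit. Unset Printing Implicit Defensive.

Lemma sum_nth (T : eqType) (s : seq T) x0 n (g : T -> nat) :
  n = size s -> (\sum_(k < n) g (nth x0 s k) = \sum_(x <- s) g x)%N.
Proof. by move->; rewrite (big_nth x0) big_mkord. Qed.

Lemma sum_enum_nth (T : finType) (A : {pred T}) (g : T -> nat) (x0 : T) :
  (\sum_(k < #|A|) g (nth x0 (enum A) k) = \sum_(x in A) g x)%N.
Proof. by rewrite (sum_nth _ _ (cardE A)) big_enum. Qed.

Lemma count_enum_sum (T : finType) (A : {pred T}) (p : pred T) :
  count p (enum A) = (\sum_(x in A) p x)%N.
Proof. by rewrite -big_enum -sum1_count big_mkcond. Qed.

Lemma card_sum_ind (T : finType) (A : {pred T}) (p : pred T) :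
  #|[set x in A | p x]| = (\sum_(x in A) p x)%N.
Proof.
rewrite -sum1_card big_mkcond [RHS]big_mkcond /=; apply: eq_bigr => x _.
by rewrite inE; case: (x \in A); case: (p x).
Qed.

Lemma sumn_const (T : Type) (l : seq T) c : sumn [seq c | _ <- l] = (size l * c)%N.
Proof. by elim: l => //= a l ->; rewrite mulSn. Qed.

Lemma card_blocks (N D F : nat) (b : nat) : (b < F)%N -> N = (F * D)%N ->
  #|[set f : 'I_N | f %/ D == b]| = D.
Proof.
move=> bF ND.
case: (posnP D) => [D0|Dpos].
  subst D; rewrite muln0 in ND; subst N.
  by apply: eq_card0 => -[].
have lt_blk (a : 'I_D) : (b * D + a < N)%N.
  rewrite ND; have := ltn_ord a; move: bF; clear; nia.
pose g (a : 'I_D) : 'I_N := Ordinal (lt_blk a).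
have ginj : injective g.
  by move=> a a' /(congr1 val) /= /addnI /val_inj.
rewrite -[RHS]card_ord -(card_imset _ ginj); apply: eq_card => f.
rewrite inE; apply/eqP/imsetP.
  move=> fb; exists (Ordinal (ltn_pmod f Dpos)) => //.
  by apply: val_inj => /=; rewrite -fb -divn_eq.
case=> a _ -> /=.
by rewrite divnMDl // divn_small // addn0.
Qed.

Section Design.
Variables (V : finType) (n m : nat) (good : nat -> {set V} -> bool).
Hypothesis good_card : forall j A, good j A -> #|A| = j.
Hypothesis good_sub : forall S U : {set V}, good (n + m) S -> U \subset S -> #|U| = n ->
  good n U && good m (S :\: U).
Variables (N Q T : nat).
Definition C := 'C(n + m, n).
Definition gN := [set A | good n A].
Definition gM := [set A | good m A].
Definition gG := [set A | good (n + m) A].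
Definition LN := enum gN.
Definition LM := enum gM.
Definition LG := enum gG.
Definition K := #|gN|.
Definition F := #|gM|.
Hypotheses (NP : (0 < N)%N) (QP : (0 < Q)%N) (TP : (0 < T)%N)
  (FN : (F %| N)%N) (KQ : (K %| Q)%N) (CT : (C - 1 %| T)%N).
Definition D := (N %/ F)%N.
Definition E := (Q %/ K)%N.
Definition t := (T %/ (C - 1))%N.
Definition DEt := (D * E * t)%N.

Lemma Fpos : (0 < F)%N. Proof. exact: dvdn_gt0 NP FN. Qed.
Lemma Kpos : (0 < K)%N. Proof. exact: dvdn_gt0 QP KQ. Qed.
Lemma C1pos : (0 < C - 1)%N. Proof. exact: dvdn_gt0 TP CT. Qed.
Lemma ND : N = (F * D)%N. Proof. by rewrite /D mulnC divnK. Qed.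
Lemma QE : Q = (K * E)%N. Proof. by rewrite /E mulnC divnK. Qed.
Lemma Tt : T = ((C - 1) * t)%N. Proof. by rewrite /t mulnC divnK. Qed.
Lemma Dpos : (0 < D)%N. Proof. move: NP; rewrite ND; nia. Qed.
Lemma Epos : (0 < E)%N. Proof. move: QP; rewrite QE; nia. Qed.
Lemma tpos : (0 < t)%N. Proof. move: TP; rewrite Tt; nia. Qed.

Definition b0 : 'I_F := Ordinal Fpos.
Definition k0 : 'I_K := Ordinal Kpos.
Definition f0 : 'I_N := Ordinal NP.
Definition j0 : 'I_Q := Ordinal QP.
Definition deft : T.-tuple bool := [tuple false | i < T].

Definition nodeS (k : 'I_K) := nth set0 LN k.
Definition batchS (b : 'I_F) := nth set0 LM b.
Definition bat (f : 'I_N) : 'I_F := insubd b0 (f %/ D)%N.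
Definition asg (j : 'I_Q) : 'I_K := insubd k0 (j %/ E)%N.
Definition miss (U B : {set V}) := good (n + m) (U :|: B).
Definition store (k : 'I_K) : {set 'I_F} := [set b | ~~ miss (nodeS k) (batchS b)].
Definition restr (k : 'I_K) (v : ivals N Q T) : ivals N Q T :=
  fun f j => if bat f \in store k then v f j else deft.
Definition fileOf (bi a : nat) : 'I_N := insubd f0 (bi * D + a)%N.
Definition funOf (ui e : nat) : 'I_Q := insubd j0 (ui * E + e)%N.
Definition memb (S : {set V}) := enum [set U : {set V} | (U \subset S) && (#|U| == n)].
Definition pieceOf (S U U' : {set V}) := unbump (index U (memb S)) (index U' (memb S)).
Definition bitv (v : ivals N Q T) (U B : {set V}) (p a e x : nat) : bool :=
  nth false (v (fileOf (index B LM) a) (funOf (index U LN) e)) (p * t + x).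
Definition xorv (v : ivals N Q T) (S U' : {set V}) (a e x : nat) :=
  \big[addb/false]_(U <- memb S | U != U') bitv v U (S :\: U) (pieceOf S U U') a e x.
Definition block (v : ivals N Q T) (U' S : {set V}) :=
  mkseq (fun i => xorv v S U' (i %/ (E * t)) ((i %/ t) %% E) (i %% t))%N DEt.
Definition grpOf (U' : {set V}) := filter (fun S : {set V} => U' \subset S) LG.
Definition enc0 (k : 'I_K) v := flatten (map (block v (nodeS k)) (grpOf (nodeS k))).
Definition lenk (k : 'I_K) := (size (grpOf (nodeS k)) * DEt)%N.
Definition enc k v := enc0 k (restr k v).
Definition decbit (s : 'I_K -> seq bool) v S U a e (x' : nat) : bool :=
  let r := index U (memb S) in
  let p := (x' %/ t)%N in let x := (x' %% t)%N in
  let s' := nth set0 (memb S) (bump r p) in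
  let sig := s (insubd k0 (index s' LN)) in
  let blk := nth [::] (reshape (nseq (size (grpOf s')) DEt) sig) (index S (grpOf s')) in
  nth false blk ((a * E + e) * t + x)%N (+)
  \big[addb/false]_(U2 <- memb S | (U2 != s') && (U2 != U))
      bitv v U2 (S :\: U2) (pieceOf S U2 s') a e x.
Definition dec0 (k : 'I_K) s v (f : 'I_N) (j : 'I_Q) : T.-tuple bool :=
  if bat f \in store k then v f j else
  [tuple decbit s v (nodeS k :|: batchS (bat f)) (nodeS k) (f %% D) (j %% E) i | i < T].
Definition dec k s v := dec0 k s (restr k v).

Lemma val_bat f : val (bat f) = (f %/ D)%N.
Proof.
rewrite val_insubd; case: ifP => // /negbT; rewrite ltn_divLR ?Dpos //.
by rewrite -ND ltn_ord.
Qed.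

Lemma val_asg j : val (asg j) = (j %/ E)%N.
Proof.
rewrite val_insubd; case: ifP => // /negbT; rewrite ltn_divLR ?Epos //.
by rewrite -QE ltn_ord.
Qed.

Lemma val_fileOf bi a : (bi < F)%N -> (a < D)%N -> val (fileOf bi a) = (bi * D + a)%N.
Proof.
move=> bF aD; rewrite val_insubd; case: ifP => // /negbT/negP[].
rewrite ND; move: bF aD; clear; nia.
Qed.

Lemma val_funOf ui e : (ui < K)%N -> (e < E)%N -> val (funOf ui e) = (ui * E + e)%N.
Proof.
move=> uK eE; rewrite val_insubd; case: ifP => // /negbT/negP[].
rewrite QE; move: uK eE; clear; nia.
Qed.

Lemma bat_fileOf bi a : (bi < F)%N -> (a < D)%N -> val (bat (fileOf bi a)) = bi.
Proof.
by move=> bF aD; rewrite val_bat val_fileOf // divnMDl ?Dpos // divn_small // addn0.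
Qed.

Lemma batch_size (b : 'I_F) : #|[set f | bat f == b]| = (N %/ F)%N.
Proof.
rewrite -/D -(card_blocks (ltn_ord b) ND); apply: eq_card => f; rewrite !inE.
by rewrite -val_eqE val_bat.
Qed.

Lemma assign_size (k : 'I_K) : #|[set j | asg j == k]| = (Q %/ K)%N.
Proof.
rewrite -/E -(card_blocks (ltn_ord k) QE); apply: eq_card => f; rewrite !inE.
by rewrite -val_eqE val_asg.
Qed.

Lemma enc_size k v : size (enc k v) = lenk k.
Proof.
rewrite /enc /enc0 size_flatten /shape -map_comp.
rewrite (eq_map (g := fun _ => DEt)); last by move=> S; rewrite /= size_mkseq.
by rewrite sumn_const.
Qed.

Lemma restr_eq k (v v' : ivals N Q T) :
  (forall f j, bat f \in store k -> v f j = v' f j) -> restr k v = restr k v'.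
Proof.
move=> H; apply: functional_extensionality => f; apply: functional_extensionality => j.
by rewrite /restr; case: ifP => // /H ->.
Qed.

Lemma enc_local k (v v' : ivals N Q T) :
  (forall f j, bat f \in store k -> v f j = v' f j) -> enc k v = enc k v'.
Proof. by move=> H; rewrite /enc (restr_eq H). Qed.

Lemma dec_local k (s s' : 'I_K -> seq bool) (v v' : ivals N Q T) :
  (forall i, s i = s' i) ->
  (forall f j, bat f \in store k -> v f j = v' f j) ->
  forall f j, dec k s v f j = dec k s' v' f j.
Proof.
move=> Hs Hv f j; rewrite /dec (restr_eq Hv).
by rewrite (functional_extensionality _ _ Hs).
Qed.


Lemma map_const_nseq (T1 T2 : Type) (l : seq T1) (c : T2) :
  [seq c | _ <- l] = nseq (size l) c.
Proof. by elim: l => //= a l ->. Qed.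

Lemma nodeS_good k : good n (nodeS k).
Proof.
have : nodeS k \in LN by apply: mem_nth; rewrite /LN -cardE ltn_ord.
by rewrite mem_enum inE.
Qed.

Lemma batchS_good b : good m (batchS b).
Proof.
have : batchS b \in LM by apply: mem_nth; rewrite /LM -cardE ltn_ord.
by rewrite mem_enum inE.
Qed.

Lemma index_nodeS k : index (nodeS k) LN = k.
Proof. by apply: index_uniq; rewrite ?enum_uniq // /LN -cardE ltn_ord. Qed.

Lemma index_batchS b : index (batchS b) LM = b.
Proof. by apply: index_uniq; rewrite ?enum_uniq // /LM -cardE ltn_ord. Qed.

Lemma mem_LN U : (U \in LN) = good n U.
Proof. by rewrite mem_enum inE. Qed.

Lemma mem_LM U : (U \in LM) = good m U.
Proof. by rewrite mem_enum inE. Qed.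

Lemma memb_mem S U : (U \in memb S) = (U \subset S) && (#|U| == n).
Proof. by rewrite mem_enum inE. Qed.

Lemma size_memb S : good (n + m) S -> size (memb S) = C.
Proof. by move=> gS; rewrite /memb -cardE cards_draws (good_card gS). Qed.

Lemma memb_good S U : good (n + m) S -> U \in memb S -> good n U.
Proof.
by move=> gS; rewrite memb_mem => /andP[sU /eqP cU]; case/andP: (good_sub gS sU cU).
Qed.

Lemma memb_goodD S U : good (n + m) S -> U \in memb S -> good m (S :\: U).
Proof.
by move=> gS; rewrite memb_mem => /andP[sU /eqP cU]; case/andP: (good_sub gS sU cU).
Qed.

Lemma miss_other S U1 U2 : good (n + m) S -> U1 \in memb S -> U2 \in memb S ->
  U1 != U2 -> ~~ miss U1 (S :\: U2).
Proof.
move=> gS; rewrite !memb_mem => /andP[s1 /eqP c1] /andP[s2 /eqP c2] ne.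
apply/negP => gm.
have cu := good_card gm.
have sub : U1 :|: (S :\: U2) \subset S by rewrite subUset s1 subsetDl.
have eqS : U1 :|: (S :\: U2) = S.
  by apply/eqP; rewrite eqEcard sub cu (good_card gS) leqnn.
have s21 : U2 \subset U1.
  apply/subsetP => x xU2; have xS : x \in S := subsetP s2 x xU2.
  by move: xS; rewrite -eqS !inE xU2 /= orbF.
have : U2 == U1 by rewrite eqEcard s21 c1 c2 leqnn.
by rewrite eq_sym (negbTE ne).
Qed.

Lemma disj_miss U B : good n U -> good m B -> miss U B -> (U :|: B) :\: U = B.
Proof.
move=> gU gB mUB.
have cu := good_card mUB; have cU := good_card gU; have cB := good_card gB.
have ci : #|U :&: B| = 0%N.
  move: cu; rewrite cardsU cU cB.
  have : (#|U :&: B| <= #|U|)%N by apply: subset_leq_card; apply: subsetIl.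
  rewrite cU; lia.
have I0 := cards0_eq ci.
apply/setP => x; rewrite !inE.
have : x \in U :&: B = false by rewrite I0 inE.
rewrite inE.
by case: (x \in U); case: (x \in B).
Qed.

Lemma idx_div a e x : (a < D)%N -> (e < E)%N -> (x < t)%N ->
  [/\ (((a * E + e) * t + x) %/ (E * t) = a)%N,
      (((((a * E + e) * t + x) %/ t) %% E) = e)%N,
      ((((a * E + e) * t + x) %% t) = x)%N &
      (((a * E + e) * t + x) < DEt)%N].
Proof.
move=> aD eE xt; have tp := tpos; have Ep := Epos.
split.
- have -> : ((a * E + e) * t + x = a * (E * t) + (e * t + x))%N by nia.
  rewrite divnMDl ?muln_gt0 ?Ep ?tp // divn_small ?addn0 //.
  move: eE xt; clear; nia.
- rewrite divnMDl // divn_small // addn0 modnMDl modn_small //.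
- by rewrite modnMDl modn_small.
- have h1 : (a * E + e < D * E)%N.
    apply: (@leq_trans (a.+1 * E)); last by rewrite leq_mul2r aD orbT.
    by rewrite mulSn; lia.
  have h2 : ((a * E + e).+1 * t <= D * E * t)%N by rewrite leq_mul2r h1 orbT.
  rewrite /DEt; move: h2 xt; rewrite mulSn; set y := ((a * E + e) * t)%N; lia.
Qed.

Lemma bitv_restr (kk : 'I_K) v S U2 p a e x : good (n + m) S ->
  nodeS kk \in memb S -> U2 \in memb S -> U2 != nodeS kk -> (a < D)%N ->
  bitv (restr kk v) U2 (S :\: U2) p a e x = bitv v U2 (S :\: U2) p a e x.
Proof.
move=> gS km U2m ne aD.
rewrite /bitv /restr.
have gB : good m (S :\: U2) := memb_goodD gS U2m.
have iB : (index (S :\: U2) LM < F)%N by rewrite /F cardE index_mem mem_LM.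
have bf : batchS (bat (fileOf (index (S :\: U2) LM) a)) = S :\: U2.
  by rewrite /batchS bat_fileOf // nth_index // mem_LM.
have -> : bat (fileOf (index (S :\: U2) LM) a) \in store kk.
  by rewrite inE bf miss_other // eq_sym.
by [].
Qed.

Lemma xor_split (r : seq {set V}) (a b : {set V}) (w : {set V} -> bool) :
  a \in r -> uniq r -> a != b ->
  \big[addb/false]_(y <- r | y != b) w y =
  w a (+) \big[addb/false]_(y <- r | (y != b) && (y != a)) w y.
Proof.
move=> ar ur ab.
rewrite big_mkcond (bigD1_seq a) //= ab; congr (_ (+) _).
rewrite [RHS]big_mkcond [LHS]big_mkcond; apply: eq_bigr => y _.
by case: (y != b); case: (y != a).
Qed.

Lemma dec_correct k (v : ivals N Q T) f j :
  asg j = k -> dec k (fun i => enc i v) v f j = v f j.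
Proof.
move=> aj; rewrite /dec /dec0.
case: ifP => st; first by rewrite /restr st.
apply: eq_from_tnth => i; rewrite tnth_mktuple (tnth_nth false).
set U := nodeS k; set B := batchS (bat f); set SS := U :|: B.
have gU : good n U := nodeS_good k.
have gB : good m B := batchS_good _.
have mUB : miss U B by move: st; rewrite inE => /negbFE.
have gS : good (n + m) SS := mUB.
have SU : SS :\: U = B := disj_miss gU gB mUB.
have Um : U \in memb SS by rewrite memb_mem subsetUl (good_card gU) eqxx.
have sz := size_memb gS.
rewrite /decbit; cbv zeta.
set r := index U (memb SS).
set p := (i %/ t)%N; set x := (i %% t)%N.
have rlt : (r < C)%N by rewrite -sz index_mem.
have plt : (p < C - 1)%N by rewrite ltn_divLR ?tpos // -Tt.
have blt : (bump r p < C)%N by rewrite /bump; case: (r <= p)%N => /=; lia.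
set s' := nth set0 (memb SS) (bump r p).
have s'm : s' \in memb SS by apply: mem_nth; rewrite sz.
have is' : index s' (memb SS) = bump r p by apply: index_uniq; rewrite ?sz ?enum_uniq.
have s'U : s' != U.
  apply/eqP => es; have := neq_bump r p; by rewrite -is' es eqxx.
have gs' : good n s' := memb_good gS s'm.
have ks : (index s' LN < K)%N by rewrite /K cardE index_mem mem_LN.
set k' := insubd k0 (index s' LN).
have ns' : nodeS k' = s' by rewrite /nodeS val_insubd ks nth_index ?mem_LN.
rewrite /= /enc /enc0 ns'.
have s'S : s' \subset SS by move: s'm; rewrite memb_mem => /andP[].
have Sg : SS \in grpOf s' by rewrite /grpOf mem_filter s'S /LG mem_enum inE gS.
rewrite (_ : nseq _ DEt = shape (map (block (restr k' v) s') (grpOf s'))); last first.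
  rewrite /shape -map_comp (eq_map (g := fun _ => DEt)); last by move=> S0; rewrite /= size_mkseq.
  by rewrite map_const_nseq.
rewrite flattenK (nth_map set0) ?index_mem // nth_index //.
have aD : (f %% D < D)%N := ltn_pmod _ Dpos.
have eE : (j %% E < E)%N := ltn_pmod _ Epos.
have xt : (x < t)%N := ltn_pmod _ tpos.
case: (idx_div aD eE xt) => d1 d2 d3 d4.
rewrite /block nth_mkseq // d1 d2 d3.
have e1 : xorv (restr k' v) SS s' (f %% D) (j %% E) x = xorv v SS s' (f %% D) (j %% E) x.
  rewrite /xorv big_seq_cond [RHS]big_seq_cond; apply: eq_bigr => U2 /andP[U2m ne].
  by rewrite bitv_restr // ns'.
have e2 : \big[addb/false]_(U2 <- memb SS | (U2 != s') && (U2 != U))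
     bitv (restr k v) U2 (SS :\: U2) (pieceOf SS U2 s') (f %% D) (j %% E) x =
   \big[addb/false]_(U2 <- memb SS | (U2 != s') && (U2 != U))
     bitv v U2 (SS :\: U2) (pieceOf SS U2 s') (f %% D) (j %% E) x.
  rewrite big_seq_cond [RHS]big_seq_cond; apply: eq_bigr => U2 /andP[U2m /andP[_ ne]].
  by rewrite bitv_restr.
rewrite e1 e2 /xorv (xor_split _ Um (enum_uniq _)); last by rewrite eq_sym.
rewrite addbK SU /bitv /pieceOf -/r is' bumpK.
rewrite /B index_batchS index_nodeS.
have -> : fileOf (bat f) (f %% D) = f.
  by apply: val_inj; rewrite val_fileOf // val_bat -divn_eq.
have -> : funOf k (j %% E) = j.
  by apply: val_inj; rewrite val_funOf // -aj val_asg -divn_eq.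
by rewrite /p /x -divn_eq.
Qed.

Definition the_scheme : scheme N K Q F T :=
  @Scheme N K Q F T bat batch_size store asg assign_size lenk enc enc_size
    enc_local dec dec_local dec_correct.


Lemma stored_card (k : 'I_K) : #|stored_files the_scheme k| = (D * #|store k|)%N.
Proof.
rewrite /stored_files /= -sum1_card (partition_big bat (mem (store k))) => [|f]; last by rewrite inE.
rewrite (eq_bigr (fun _ => D)); first by rewrite sum_nat_const mulnC.
move=> b bk; rewrite sum1_card; transitivity #|[set f | bat f == b]|; last exact: batch_size b.
apply: eq_card => f.
have bk2 : b \in store k by [].
have bk' : ~~ miss (nodeS k) (batchS b) by move: bk2; rewrite inE.
rewrite unfold_in /= !inE.
by case: (eqVneq (bat f) b) => [->|ne]; rewrite ?bk' ?andbF.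
Qed.

Lemma store_compl (k : 'I_K) :
  (#|store k| + #|[set b | miss (nodeS k) (batchS b)]| = F)%N.
Proof.
have -> : store k = ~: [set b | miss (nodeS k) (batchS b)].
  by apply/setP => b; rewrite !inE.
by rewrite addnC cardsC card_ord.
Qed.

Lemma batchS_inj : injective batchS.
Proof. by move=> b1 b2 e; apply: val_inj; rewrite /= -(index_batchS b1) e index_batchS. Qed.

Lemma setUD_sub (U S : {set V}) : U \subset S -> U :|: (S :\: U) = S.
Proof.
move=> US; apply/setP => x; rewrite !inE; case xU: (x \in U) => //=.
by rewrite (subsetP US).
Qed.

Lemma miss_card1 U : #|[set b : 'I_F | miss U (batchS b)]| = #|[set B in gM | miss U B]|.
Proof.
rewrite -(card_imset _ batchS_inj); apply: eq_card => B; rewrite inE.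
apply/imsetP/idP.
  by case=> b; rewrite inE => mb ->; rewrite inE batchS_good mb.
rewrite inE => /andP[gB mB].
have iB : (index B LM < F)%N by rewrite /F cardE index_mem mem_LM.
exists (insubd b0 (index B LM)); rewrite ?inE /batchS val_insubd iB nth_index ?mem_LM //.
Qed.

Lemma miss_card2 U : good n U ->
  #|[set B in gM | miss U B]| = #|[set S in gG | U \subset S]|.
Proof.
move=> gU.
have inj : {in [set B in gM | miss U B] &, injective (fun B => U :|: B)}.
  move=> B1 B2; rewrite !inE => /andP[g1 m1] /andP[g2 m2] e.
  by rewrite -(disj_miss gU g1 m1) e (disj_miss gU g2 m2).
rewrite -(card_in_imset inj); apply: eq_card => S.
apply/imsetP/idP.
  case=> B; rewrite !inE => /andP[gB mB] ->.
  by rewrite -/(miss U B) mB subsetUl.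
rewrite !inE => /andP[gS US].
case/andP: (good_sub gS US (good_card gU)) => _ gD.
exists (S :\: U); last by rewrite setUD_sub.
by rewrite !inE gD /miss setUD_sub.
Qed.

Lemma pairs_sum : (\sum_(U in gN) #|[set S in gG | U \subset S]| = #|gG| * C)%N.
Proof.
under eq_bigr do rewrite card_sum_ind.
rewrite exchange_big /=.
rewrite (eq_bigr (fun _ => C)); first by rewrite sum_nat_const.
move=> S gS; rewrite inE in gS.
rewrite -card_sum_ind /C -(good_card gS) -cards_draws; apply: eq_card => U.
rewrite !inE; apply/andP/andP => [[gU US]|[US /eqP cU]].
  by rewrite US (good_card gU).
by case/andP: (good_sub gS US cU).
Qed.

Lemma sum_nodes (g : {set V} -> nat) :
  (\sum_(k < K) g (nodeS k) = \sum_(U in gN) g U)%N.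
Proof. exact: sum_enum_nth. Qed.

Lemma stored_sum :
  (\sum_(k < K) #|stored_files the_scheme k| + D * (#|gG| * C) = D * (K * F))%N.
Proof.
under eq_bigr do rewrite stored_card.
rewrite -pairs_sum -sum_nodes -big_distrr -mulnDr -big_split /=; congr (D * _)%N.
rewrite (eq_bigr (fun _ => F)); first by rewrite sum_nat_const card_ord.
by move=> k _; rewrite -miss_card2 ?nodeS_good // -miss_card1 store_compl.
Qed.

Lemma len_sum : (\sum_(k < K) len the_scheme k = #|gG| * C * DEt)%N.
Proof.
rewrite /= /lenk -big_distrl /= -pairs_sum -sum_nodes.
congr (_ * _)%N; apply: eq_bigr => k _.
by rewrite /grpOf size_filter /LG count_enum_sum card_sum_ind.
Qed.

End Design.

End Des.

Unset Implicit Arguments. Set Strict Implicit. Set Printing Implicit Defensive.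
Local Open Scope ring_scope.

Section Final.
Variables (q k : nat).
Hypothesis q1 : (1 < q)%N.

Definition w (i : nat) : rat := ((q%:R : rat) ^+ k - q%:R ^+ i) / (q%:R - 1).

Lemma q1r : (q%:R : rat) - 1 != 0.
Proof. by rewrite subr_eq0 pnatr_eq1; move: q1; case: q => [|[|]]. Qed.

Lemma fact_neq0 j : (j`!%:R : rat) != 0.
Proof. by rewrite pnatr_eq0 -lt0n fact_gt0. Qed.

Lemma gbin_w i : (i <= k)%N -> (q%:R : rat) ^+ i * gbin1 q (k - i) = w i.
Proof.
move=> ik; rewrite /gbin1 /w mulrA mulrBr mulr1 -exprD subnKC //.
Qed.

Lemma gbin_neq0 a : (0 < a)%N -> gbin1 q a != 0.
Proof.
move=> a0; rewrite /gbin1 mulf_neq0 ?invr_eq0 ?q1r //.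
rewrite subr_eq0 -natrX pnatr_eq1.
have : (1 < q ^ a)%N by rewrite -{1}(expn0 q) ltn_exp2l.
by rewrite neq_ltn => ->; rewrite orbT.
Qed.

Lemma Gw (G j : nat) : (j <= k)%N ->
  (G * j`! * (q - 1) ^ j = \prod_(i < j) (q ^ k - q ^ i))%N ->
  (G%:R : rat) = (j`!%:R)^-1 * \prod_(i < j) w i.
Proof.
move=> jk H.
have Hr : (G%:R : rat) * j`!%:R * ((q%:R - 1) ^+ j) =
          \prod_(i < j) ((q%:R : rat) ^+ k - q%:R ^+ i).
  have := congr1 (fun x => x%:R : rat) H.
  rewrite /= !natrM natrX natrB ?(ltnW q1) // natr_prod => ->.
  apply: eq_bigr => i _; rewrite natrB ?natrX //.
  apply: leq_pexp2l; first exact: ltnW q1.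
  exact: ltnW (leq_trans (ltn_ord i) jk).
rewrite /w prodf_div prodr_const card_ord -Hr.
have := q1r; have := fact_neq0 j => h1 h2.
field; by rewrite h1 /= expf_neq0.
Qed.

Lemma formula_w j : (j <= k)%N ->
  (j`!%:R)^-1 * (q%:R : rat) ^+ ((j * (j - 1)) %/ 2) * \prod_(i < j) gbin1 q (k - i) =
  (j`!%:R)^-1 * \prod_(i < j) w i.
Proof.
move=> jk; rewrite -mulrA; congr (_ * _).
have -> : ((j * (j - 1)) %/ 2 = \sum_(i < j) i)%N.
  by rewrite -(big_mkord xpredT (fun i => i)) bin2_sum bin2 subn1 divn2.
rewrite expr_sum -big_split /=; apply: eq_bigr => i _; apply: gbin_w.
exact: ltnW (leq_trans (ltn_ord i) jk).
Qed.

Lemma wsplit a b : (a + b <= k)%N ->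
  \prod_(i < a + b) w i = \prod_(i < a) w i * \prod_(i < b) w i *
    ((q%:R : rat) ^+ (a * b) * \prod_(i < b) (gbin1 q (k - a - i) / gbin1 q (k - i))).
Proof.
move=> abk; rewrite big_split_ord /= -mulrA; congr (_ * _).
have -> : (q%:R : rat) ^+ (a * b) = \prod_(i < b) (q%:R ^+ a).
  by rewrite prodr_const card_ord exprM.
rewrite -!big_split /=; apply: eq_bigr => i _.
have ib := ltn_ord i.
have h1 : (i <= k)%N by move: ib abk; clear; lia.
have h2 : (a + i <= k)%N by move: ib abk; clear; lia.
have h3 : (0 < k - i)%N by move: ib abk; clear; lia.
rewrite -(gbin_w _ h1) -(gbin_w _ h2) subnDA exprD.
have := gbin_neq0 _ h3 => g0.
by field.
Qed.

Lemma Cr n m : ('C(n + m, n)%:R : rat) = (n + m)`!%:R / (n`!%:R * m`!%:R).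
Proof.
rewrite -(bin_fact (leq_addr m n)) addKn !natrM.
have := fact_neq0 n; have := fact_neq0 m => h1 h2.
by field; rewrite h1 h2.
Qed.

End Final.

Theorem theorem6 (k n m q : nat) :
  (0 < n)%N -> (0 < m)%N -> (n + m <= k)%N -> is_prime_power q ->
  exists KC FC : nat,
    (KC%:R : rat) = (n`!%:R)^-1 * (q%:R) ^+ ((n * (n - 1)) %/ 2)
                    * \prod_(i < n) gbin1 q (k - i) /\
    (FC%:R : rat) = (m`!%:R)^-1 * (q%:R) ^+ ((m * (m - 1)) %/ 2)
                    * \prod_(i < m) gbin1 q (k - i) /\
    forall N Q T : nat,
      (0 < N)%N -> (FC %| N)%N -> (0 < Q)%N -> (KC %| Q)%N -> (0 < T)%N ->
      ('C(n + m, n) - 1 %| T)%N ->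
      exists S : scheme N KC Q FC T,
        comp_load S = KC%:R * (1 - (q%:R) ^+ (n * m)
                         * \prod_(i < m) (gbin1 q (k - n - i) / gbin1 q (k - i))) /\
        comm_load S = (q%:R) ^+ (n * m) / (('C(n + m, n))%:R - 1)
                         * \prod_(i < n) (gbin1 q (k - m - i) / gbin1 q (k - i)).
Proof.
move=> n0 m0 nmk [p [e [pp [e0 qe]]]].
case: (pPrimePowerField pp e0) => Fq _ cardF.
have cF : #|Fq| = q by rewrite cardF qe.
have q1 : (1 < q)%N by rewrite qe -(expn0 p) ltn_exp2l ?prime_gt1.
have GP j : (Geo.G Fq k j * j`! * (q - 1) ^ j = \prod_(i < j) (q ^ k - q ^ i))%N.
  by rewrite -cF Geo.G_prod.
have nk : (n <= k)%N by move: nmk; clear; lia.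
have mk : (m <= k)%N by move: nmk; clear; lia.
have HK := Gw _ _ q1 _ _ nk (GP n).
have HF := Gw _ _ q1 _ _ mk (GP m).
have HG := Gw _ _ q1 _ _ nmk (GP (n + m)%N).
exists (Geo.G Fq k n), (Geo.G Fq k m).
split; first by rewrite formula_w // HK.
split; first by rewrite formula_w // HF.
move=> N Q T NP FN QP KQ TP CT.
pose good := @Geo.good Fq k.
have gcard := @Geo.good_card Fq k.
have gsub := @Geo.good_sub Fq k n m.
exists (@Des.the_scheme _ n m good gcard gsub N Q T NP QP TP FN KQ CT).
have Cpos := @Des.C1pos n m T TP CT.
have Dp := @Des.Dpos _ n m good N Q T NP QP TP FN KQ CT.
have Ep := @Des.Epos _ n m good N Q T NP QP TP FN KQ CT.
have tp := @Des.tpos _ n m good N Q T NP QP TP FN KQ CT.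
have Kp := @Des.Kpos _ n good Q QP KQ.
have Fp := @Des.Fpos _ m good N NP FN.
have ND := @Des.ND _ m good N FN.
have QE := @Des.QE _ n good Q KQ.
have Tt := @Des.Tt n m T CT.
set K := Des.K n good in Kp ND QE.
set F := Des.F m good in Fp ND QE.
have eK : K = Geo.G Fq k n by [].
have eF : F = Geo.G Fq k m by [].
have eG : #|Des.gG n m good| = Geo.G Fq k (n + m) by [].
set D := Des.D m good N in Dp ND.
set E := Des.E n good Q in Ep QE.
set t := Des.t n m T in tp Tt.
have D0 : (D%:R : rat) != 0 by rewrite pnatr_eq0 -lt0n.
have E0 : (E%:R : rat) != 0 by rewrite pnatr_eq0 -lt0n.
have t0 : (t%:R : rat) != 0 by rewrite pnatr_eq0 -lt0n.
have K0 : (K%:R : rat) != 0 by rewrite pnatr_eq0 -lt0n.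
have F0 : (F%:R : rat) != 0 by rewrite pnatr_eq0 -lt0n.
have C1 : (('C(n + m, n))%:R : rat) - 1 != 0.
  have Cge : (1 <= 'C(n + m, n))%N by move: Cpos; rewrite /Des.C; lia.
  by rewrite (_ : 1 = 1%:R) // -natrB // pnatr_eq0 -lt0n.
have h1 := fact_neq0 n; have h2 := fact_neq0 m; have h3 := fact_neq0 (n + m).
have key : ((Geo.G Fq k (n + m))%:R : rat) * ('C(n + m, n))%:R =
   (Geo.G Fq k n)%:R * (Geo.G Fq k m)%:R *
   ((q%:R) ^+ (n * m) * \prod_(i < m) (gbin1 q (k - n - i) / gbin1 q (k - i))).
  rewrite HG HK HF Cr (wsplit _ _ q1 _ _ nmk).
  by field; rewrite h1 h2 h3.
have key2 : ((Geo.G Fq k (n + m))%:R : rat) * ('C(n + m, n))%:R =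
   (Geo.G Fq k n)%:R * (Geo.G Fq k m)%:R *
   ((q%:R) ^+ (n * m) * \prod_(i < n) (gbin1 q (k - m - i) / gbin1 q (k - i))).
  have nmk' : (m + n <= k)%N by rewrite addnC.
  have := wsplit _ _ q1 _ _ nmk'; rewrite addnC => W.
  rewrite HG HK HF Cr W mulnC.
  by field; rewrite h1 h2 h3.
split.
- rewrite /comp_load.
  have H := @Des.stored_sum _ n m good gcard gsub N Q T NP QP TP FN KQ CT.
  move: H; rewrite -/K -/F -/D eG /Des.C.
  set s := (\sum_(k0 < K) _)%N => H.
  have Hr := congr1 (fun x => x%:R : rat) H; rewrite /= !natrD !natrM in Hr.
  have Es : (s%:R : rat) = D%:R * (K%:R * F%:R) -
      D%:R * ((Geo.G Fq k (n + m))%:R * ('C(n + m, n))%:R) by rewrite -Hr addrK.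
  rewrite Es [in X in _ / X]ND natrM key -eK -eF.
  by field; rewrite D0 F0.
- rewrite /comm_load.
  have H := @Des.len_sum _ n m good gcard gsub N Q T NP QP TP FN KQ CT.
  rewrite H eG /Des.C /Des.DEt -/D -/E -/t.
  rewrite [Q]QE [N]ND [T]Tt !natrM key2 -eK -eF.
  rewrite natrB; last by move: Cpos; rewrite /Des.C; lia.
  move: C1; set c := ('C(n + m, n))%:R => C1.
  by field; rewrite C1 D0 E0 t0 K0 F0.
Qed.
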